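(* Let $R(x_1,\dots,x_n)$ be a 2-definable relation on $\mathcal M$ which is not definable in the pure equality language (i.e. $R$ is not preserved by all permutations of $\mathcal M$). Then the set $\{\vec 0\}$ is definable by $R$.
   Context: $\mathcal M$ denotes the $\mathbb Q$-vector space $\mathbb Q^{<\omega}$ of all sequences of rationals with only finitely many nonzero terms, with zero vector $\vec 0$. For a set $\Sigma$ of relations on $\mathcal M$, a relation is definable by $\Sigma$ if it is first-order definable without parameters in the structure $\langle\mathcal M;\Sigma\rangle$ (equality is always available). A relation is 2-definable if it is definable by the family of binary relations $\{\{(x,y):y=rx\}: r\in\mathbb Q\}$. *)

(* Defs.v *)
From HB Require Import structures.
From mathcomp Require Import all_boot all_order all_algebra.
Set Implicit Arguments. Unset Strict Implicit. Unset Printing Implicit Defensive.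
Import GRing.Theory Num.Theory.
Local Open Scope ring_scope.

(** The Q-vector space M = Q^{<omega}: finitely supported rational sequences. *)
Definition M : Type :=
  { f : nat -> rat | exists N : nat, forall k : nat, (N <= k)%N -> f k = 0 }.

Definition Mseq (x : M) : nat -> rat := proj1_sig x.

Definition Mzero_fun (k : nat) : rat := 0.
Lemma Mzero_fin : exists N : nat, forall k : nat, (N <= k)%N -> Mzero_fun k = 0.
Proof. by exists 0%N. Qed.
Definition Mzero : M := exist _ Mzero_fun Mzero_fin.

Lemma Mscale_fin (r : rat) (x : M) :
  exists N : nat, forall k : nat, (N <= k)%N -> r * Mseq x k = 0.
Proof.
case: x => f [N HN]; exists N => k Hk /=; by rewrite HN // mulr0.
Qed.
Definition Mscale (r : rat) (x : M) : M :=
  exist _ (fun k => r * Mseq x k) (Mscale_fin r x).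

Definition relM (n : nat) := ('I_n -> M) -> Prop.

Record signature := Signature {
  sig_idx : Type;
  sig_ar : sig_idx -> nat;
  sig_interp : forall i : sig_idx, relM (sig_ar i)
}.

Inductive formula (S : signature) : Type :=
| FEq : nat -> nat -> formula S
| FRel : forall i : sig_idx S, ('I_(sig_ar i) -> nat) -> formula S
| FFalse : formula S
| FNot : formula S -> formula S
| FAnd : formula S -> formula S -> formula S
| FOr : formula S -> formula S -> formula S
| FImp : formula S -> formula S -> formula S
| FEx : nat -> formula S -> formula S
| FAll : nat -> formula S -> formula S.

Definition upd (e : nat -> M) (x : nat) (a : M) : nat -> M :=
  fun y => if y == x then a else e y.

Fixpoint sat (S : signature) (e : nat -> M) (phi : formula S) : Prop :=
  match phi with
  | FEq x y => e x = e y
  | FRel i args => @sig_interp S i (fun j => e (args j))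
  | FFalse => False
  | FNot p => ~ sat e p
  | FAnd p q => sat e p /\ sat e q
  | FOr p q => sat e p \/ sat e q
  | FImp p q => sat e p -> sat e q
  | FEx x p => exists a : M, sat (upd e x a) p
  | FAll x p => forall a : M, sat (upd e x a) p
  end.

Definition definable (S : signature) (n : nat) (R : relM n) : Prop :=
  exists phi : formula S,
    forall e : nat -> M, R (fun i : 'I_n => e (nat_of_ord i)) <-> sat e phi.

Definition sig_eq : signature :=
  @Signature Empty_set (fun _ => 0%N) (fun i => match i with end).

Definition sig_scal : signature :=
  @Signature rat (fun _ => 2%N)
    (fun r (v : 'I_2 -> M) => v (@Ordinal 2 1 isT) = Mscale r (v (@Ordinal 2 0 isT))).

Definition sig_single (n : nat) (R : relM n) : signature :=
  @Signature unit (fun _ => n) (fun _ => R).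

Definition two_definable (n : nat) (R : relM n) : Prop := definable sig_scal R.

Definition zero_rel : relM 1 := fun v => v ord0 = Mzero.

(* Main.v *)
Require Import Defs.
From mathcomp Require Import all_boot all_order all_algebra.
From Stdlib Require Import Classical FunctionalExtensionality ProofIrrelevance.
From Stdlib Require List.
From mathcomp Require Import zify.
Set Implicit Arguments. Unset Strict Implicit. Unset Printing Implicit Defensive.
Import GRing.Theory Num.Theory.

Lemma M_ext (x y : M) : (forall k, Mseq x k = Mseq y k) -> x = y.
Proof.
case: x => f Hf; case: y => g Hg /= H.
have E : f = g by apply: functional_extensionality.
subst g; f_equal; apply: proof_irrelevance.
Qed.

Lemma Mseq_scale r x k : Mseq (Mscale r x) k = (r * Mseq x k)%R.
Proof. by []. Qed.
Lemma Mseq_zero k : Mseq Mzero k = 0%R.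
Proof. by []. Qed.

Lemma MscaleA p q x : Mscale p (Mscale q x) = Mscale (p * q)%R x.
Proof. by apply: M_ext => k; rewrite !Mseq_scale mulrA. Qed.
Lemma Mscale1 x : Mscale 1%R x = x.
Proof. by apply: M_ext => k; rewrite Mseq_scale mul1r. Qed.
Lemma Mscale0 x : Mscale 0%R x = Mzero.
Proof. by apply: M_ext => k; rewrite Mseq_scale mul0r. Qed.
Lemma MscaleZ q : Mscale q Mzero = Mzero.
Proof. by apply: M_ext => k; rewrite Mseq_scale Mseq_zero mulr0. Qed.

Lemma Mscale_inj q x y : q != 0%R -> Mscale q x = Mscale q y -> x = y.
Proof.
move=> q0 /(congr1 (Mscale q^-1)); by rewrite !MscaleA mulVf // !Mscale1.
Qed.

Lemma Mnz_ex x : x <> Mzero -> exists k, Mseq x k != 0%R.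
Proof.
move=> xn; apply: NNPP => H; apply: xn; apply: M_ext => k.
rewrite Mseq_zero; apply: NNPP => H2; apply: H; exists k; by apply/eqP.
Qed.

Lemma Mself x q : x <> Mzero -> (x = Mscale q x <-> q = 1%R).
Proof.
move=> xn; split; last by move=> ->; rewrite Mscale1.
move=> E; have [k Hk] := Mnz_ex xn.
have : Mseq x k = (q * Mseq x k)%R by rewrite {1}E.
move=> /eqP; rewrite -subr_eq0 -{1}(mul1r (Mseq x k)) -mulrBl mulf_eq0 (negbTE Hk) orbF subr_eq0.
by move/eqP.
Qed.

Lemma Mzero_scale q x : Mzero = Mscale q x <-> q = 0%R \/ x = Mzero.
Proof.
split.
- move=> E; case: (eqVneq q 0%R) => [->|qn]; first by left.
  right; apply: (@Mscale_inj q) => //; by rewrite MscaleZ.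
- by case=> [->|->]; rewrite ?Mscale0 ?MscaleZ.
Qed.

Lemma scale_move r q y z : r != 0%R ->
  (Mscale r y = Mscale q z <-> y = Mscale (r^-1 * q)%R z).
Proof.
move=> r0; split.
- by move=> /(congr1 (Mscale r^-1)); rewrite !MscaleA mulVf // Mscale1.
- by move=> ->; rewrite MscaleA mulrA divff // mul1r.
Qed.

Lemma Munit_fin N : exists K, forall k, (K <= k)%N -> (if k == N then 1%R else 0%R : rat) = 0%R.
Proof.
exists N.+1 => k Hk; case: eqP => // E; subst; by rewrite ltnn in Hk.
Qed.
Definition Munit N : M := exist _ (fun k => if k == N then 1%R else 0%R) (Munit_fin N).

Lemma Mseq_unit N k : Mseq (Munit N) k = (if k == N then 1%R else 0%R).
Proof. by []. Qed.

Lemma Munit_far N x q : Mseq x N = 0%R ->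
  Munit N <> Mscale q x /\ (q != 0%R -> x <> Mscale q (Munit N)).
Proof.
move=> HN; split.
- move=> /(congr1 (fun z => Mseq z N)); rewrite Mseq_scale Mseq_unit eqxx HN mulr0.
  by move/eqP; rewrite oner_eq0.
- move=> q0 /(congr1 (fun z => Mseq z N)); rewrite Mseq_scale Mseq_unit eqxx HN mulr1.
  by move=> E; rewrite E eqxx in q0.
Qed.

Lemma Munit_nz N : Munit N <> Mzero.
Proof.
move=> /(congr1 (fun z => Mseq z N)); rewrite Mseq_unit eqxx Mseq_zero.
by move/eqP; rewrite oner_eq0.
Qed.

Lemma Munit_inj a b : Munit a = Munit b -> a = b.
Proof.
move=> /(congr1 (fun z => Mseq z a)); rewrite !Mseq_unit eqxx.
by case: eqP => // _ /eqP; rewrite eq_sym oner_eq0.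
Qed.

Lemma supp_bound (V : seq nat) (f : nat -> M) :
  exists N, forall k, k \in V -> forall i, (N <= i)%N -> Mseq (f k) i = 0%R.
Proof.
elim: V => [|v V [N HN]]; first by exists 0.
have [Nv HNv] := proj2_sig (f v).
exists (maxn N Nv) => k; rewrite inE => /orP[/eqP->|kV] i Hi.
- apply: HNv; apply: leq_trans Hi; exact: leq_maxr.
- apply: HN => //; apply: leq_trans Hi; exact: leq_maxl.
Qed.

Definition eqv (G : seq rat) (V : seq nat) (e e' : nat -> M) :=
  forall i j, i \in V -> j \in V -> forall q, q \in G ->
    (e i = Mscale q (e j) <-> e' i = Mscale q (e' j)).

Lemma eqv_sym G V e e' : eqv G V e e' -> eqv G V e' e.
Proof. move=> H i j iV jV q qG; by rewrite (H i j iV jV q qG). Qed.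

Lemma eqv_subG G G' V e e' : {subset G' <= G} -> eqv G V e e' -> eqv G' V e e'.
Proof. move=> s H i j iV jV q qG; exact: H (s _ qG). Qed.

Lemma eqv_subV G V V' e e' : {subset V' <= V} -> eqv G V e e' -> eqv G V' e e'.
Proof. move=> s H i j iV jV q qG; exact: H (s _ iV) (s _ jV) q qG. Qed.

Definition G2 (G : seq rat) : seq rat := [:: 0%R, 1%R & G ++ map GRing.inv G].
Definition step (G : seq rat) : seq rat := [seq (p * q)%R | p <- G2 G, q <- G2 G].

Lemma G_G2 G q : q \in G -> q \in G2 G.
Proof. by move=> qG; rewrite !inE mem_cat qG !orbT. Qed.
Lemma G2_0 G : 0%R \in G2 G. Proof. by rewrite inE eqxx. Qed.
Lemma G2_1 G : 1%R \in G2 G. Proof. by rewrite !inE eqxx orbT. Qed.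
Lemma G2_inv G q : q \in G2 G -> q^-1%R \in G2 G.
Proof.
rewrite !inE mem_cat => /orP[/eqP->|/orP[/eqP->|/orP[qG|qG]]].
- by rewrite invr0 eqxx.
- by rewrite invr1 eqxx orbT.
- by rewrite mem_cat map_f ?orbT.
- move/mapP: qG => [p pG ->]; by rewrite invrK mem_cat pG !orbT.
Qed.
Lemma step_mul G p q : p \in G2 G -> q \in G2 G -> (p * q)%R \in step G.
Proof. move=> pG qG; exact: (allpairs_f (fun x y => (x * y)%R) pG qG). Qed.
Lemma G_step G q : q \in G -> q \in step G.
Proof. move=> qG; rewrite -(mulr1 q); apply: step_mul; [exact: G_G2 | exact: G2_1]. Qed.
Lemma step0 G : 0%R \in step G.
Proof. rewrite -(mulr0 0%R); apply: step_mul; exact: G2_0. Qed.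

Lemma eqv_zero G V e e' i : eqv (step G) V e e' -> i \in V ->
  (e i = Mzero <-> e' i = Mzero).
Proof.
move=> H iV; have := H i i iV iV 0%R (step0 G); by rewrite !Mscale0.
Qed.

Lemma upd_eq (e : nat -> M) x a : upd e x a x = a.
Proof. by rewrite /upd eqxx. Qed.
Lemma upd_neq (e : nat -> M) x a y : y != x -> upd e x a y = e y.
Proof. by rewrite /upd => /negbTE->. Qed.
Lemma upd_same (e : nat -> M) x : upd e x (e x) = e.
Proof. apply: functional_extensionality => y; rewrite /upd; by case: eqP => [->|]. Qed.

Lemma ext_lemma G V e e' x a : eqv (step G) V e e' ->
  exists a', eqv G (x :: V) (upd e x a) (upd e' x a').
Proof.
move=> H.
have memV : forall i, i \in x :: V -> i != x -> i \in V.
  by move=> i; rewrite inE => /orP[->|].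
have HG : forall i j, i \in V -> j \in V -> forall q, q \in G ->
  (e i = Mscale q (e j) <-> e' i = Mscale q (e' j)).
  by move=> i j iV jV q qG; apply: H => //; exact: G_step.
case: (classic (a = Mzero)) => [a0|an0].
  exists Mzero => i j iV jV q qG.
  subst a.
  case: (eqVneq i x) => [->|ix]; case: (eqVneq j x) => [->|jx].
  - by rewrite !upd_eq.
  - have jV' := memV _ jV jx.
    rewrite !upd_eq !(upd_neq _ _ jx) !Mzero_scale; have := eqv_zero H jV'; intuition.
  - have iV' := memV _ iV ix.
    rewrite !upd_eq !(upd_neq _ _ ix) !MscaleZ; exact: eqv_zero H iV'.
  - rewrite !(upd_neq _ _ ix) !(upd_neq _ _ jx).
    exact: HG (memV _ iV ix) (memV _ jV jx) q qG.
case: (classic (exists k r, k \in V /\ k != x /\ r \in G2 G /\ r != 0%R /\ a = Mscale r (e k)))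
  => [[k [r [kV [kx [rG [r0 ea]]]]]] | Hno].
  exists (Mscale r (e' k)).
  have ek : e k <> Mzero by move=> E; apply: an0; rewrite ea E MscaleZ.
  have e'k : e' k <> Mzero by move=> E; apply: ek; apply/(eqv_zero H kV).
  have a'n : Mscale r (e' k) <> Mzero.
    move=> E; symmetry in E; move/Mzero_scale: E => [E|E]; last by [].
    by rewrite E eqxx in r0.
  move=> i j iV jV q qG.
  case: (eqVneq i x) => [->|ix]; case: (eqVneq j x) => [->|jx].
  - rewrite !upd_eq (Mself q an0) (Mself q a'n); by [].
  - have jV' := memV _ jV jx; rewrite !upd_eq !(upd_neq _ _ jx) ea !(scale_move _ _ _ r0).
    apply: H => //; apply: step_mul; [exact: G2_inv | exact: G_G2].
  - have iV' := memV _ iV ix; rewrite !upd_eq !(upd_neq _ _ ix) ea !MscaleA.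
    apply: H => //; apply: step_mul; [exact: G_G2 | exact: rG].
  - rewrite !(upd_neq _ _ ix) !(upd_neq _ _ jx).
    exact: HG (memV _ iV ix) (memV _ jV jx) q qG.
have [N HN] := supp_bound V e'.
exists (Munit N) => i j iV jV q qG.
case: (eqVneq i x) => [->|ix]; case: (eqVneq j x) => [->|jx].
- rewrite !upd_eq (Mself q an0) (Mself q (@Munit_nz N)); by [].
- have jV' := memV _ jV jx; rewrite !upd_eq !(upd_neq _ _ jx); split => E; exfalso.
  + case: (eqVneq q 0%R) => [q0|q0].
      by apply: an0; rewrite E q0 Mscale0.
    apply: Hno; exists j, q; split; [done | split; [done | split; [exact: G_G2 | by split]]].
  + exact: (Munit_far q (HN j jV' N (leqnn N))).1 E.
- have iV' := memV _ iV ix; rewrite !upd_eq !(upd_neq _ _ ix).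
  case: (eqVneq q 0%R) => [q0|q0].
    rewrite q0 !Mscale0; exact: eqv_zero H iV'.
  split => E; exfalso.
  + apply: Hno; exists i, q^-1%R; split; [done | split; [done | split]].
      by apply: G2_inv; apply: G_G2.
    split; first by rewrite invr_eq0.
    by rewrite E MscaleA mulVf // Mscale1.
  + exact: (Munit_far q (HN i iV' N (leqnn N))).2 q0 E.
- rewrite !(upd_neq _ _ ix) !(upd_neq _ _ jx).
  exact: HG (memV _ iV ix) (memV _ jV jx) q qG.
Qed.
Fixpoint fv {S : signature} (p : formula S) : seq nat :=
  match p with
  | FEq x y => [:: x; y]
  | @FRel _ i args => [seq args j | j <- enum 'I_(sig_ar i)]
  | FFalse => [::]
  | FNot p => fv p
  | FAnd p q | FOr p q | FImp p q => fv p ++ fv q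
  | FEx x p | FAll x p => [seq y <- fv p | y != x]
  end.

Fixpoint depth {S : signature} (p : formula S) : nat :=
  match p with
  | FEq _ _ | FRel _ _ | FFalse => 0
  | FNot p => depth p
  | FAnd p q | FOr p q | FImp p q => maxn (depth p) (depth q)
  | FEx _ p | FAll _ p => (depth p).+1
  end.

Fixpoint atoms_ok {S : signature} (ok : sig_idx S -> Prop) (p : formula S) : Prop :=
  match p with
  | @FRel _ i _ => ok i
  | FNot p => atoms_ok ok p
  | FAnd p q | FOr p q | FImp p q => atoms_ok ok p /\ atoms_ok ok q
  | FEx _ p | FAll _ p => atoms_ok ok p
  | _ => True
  end.

Section Invariance.
Variable S : signature.
Variable ok : sig_idx S -> Prop.
Variable G0 : seq rat.
Hypothesis G00 : 0%R \in G0.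
Hypothesis G01 : 1%R \in G0.
Hypothesis atom_inv : forall i (args : 'I_(sig_ar i) -> nat) V e e', ok i ->
  eqv G0 V e e' -> (forall j, args j \in V) ->
  (@sig_interp S i (fun j => e (args j)) <-> @sig_interp S i (fun j => e' (args j))).

Definition Gn k := iter k step G0.

Lemma G0_Gn k q : q \in G0 -> q \in Gn k.
Proof. elim: k => [//|k IH] qG /=; exact: G_step (IH qG). Qed.

Theorem sat_inv (p : formula S) : forall k, atoms_ok ok p -> (depth p <= k)%N ->
  forall V e e', eqv (Gn k) V e e' -> {subset fv p <= V} -> (sat e p <-> sat e' p).
Proof.
elim: p => [x y|i args||p IH|p IHp q IHq|p IHp q IHq|p IHp q IHq|x p IH|x p IH]
  k /= Hok Hd V e e' H Hs.
- have xV : x \in V by apply: Hs; rewrite inE eqxx.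
  have yV : y \in V by apply: Hs; rewrite !inE eqxx orbT.
  have := H x y xV yV 1%R (G0_Gn k G01); by rewrite !Mscale1.
- apply: atom_inv => //.
  + apply: eqv_subG H => q; exact: G0_Gn.
  + move=> j; apply: Hs; apply: map_f; exact: mem_enum.
- by [].
- by rewrite (IH k Hok Hd V e e' H Hs).
- have [o1 o2] := Hok; rewrite geq_max in Hd; case/andP: Hd => d1 d2.
  rewrite (IHp k o1 d1 V e e' H) ?(IHq k o2 d2 V e e' H) //.
  + by move=> z zq; apply: Hs; rewrite mem_cat zq orbT.
  + by move=> z zp; apply: Hs; rewrite mem_cat zp.
- have [o1 o2] := Hok; rewrite geq_max in Hd; case/andP: Hd => d1 d2.
  rewrite (IHp k o1 d1 V e e' H) ?(IHq k o2 d2 V e e' H) //.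
  + by move=> z zq; apply: Hs; rewrite mem_cat zq orbT.
  + by move=> z zp; apply: Hs; rewrite mem_cat zp.
- have [o1 o2] := Hok; rewrite geq_max in Hd; case/andP: Hd => d1 d2.
  rewrite (IHp k o1 d1 V e e' H) ?(IHq k o2 d2 V e e' H) //.
  + by move=> z zq; apply: Hs; rewrite mem_cat zq orbT.
  + by move=> z zp; apply: Hs; rewrite mem_cat zp.
- case: k Hd H => [//|k] Hd H.
  have Hs' : {subset fv p <= x :: V}.
    move=> z zp; rewrite inE; case: (eqVneq z x) => //= zx.
    by apply: Hs; rewrite mem_filter zx zp.
  split=> [[a Ha]|[a Ha]].
  + have [a' H'] := ext_lemma x a H.
    exists a'; exact: (IH k Hok Hd _ _ _ H' Hs').1 Ha.
  + have [a' H'] := ext_lemma x a (eqv_sym H).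
    exists a'; exact: (IH k Hok Hd _ _ _ (eqv_sym H') Hs').2 Ha.
- case: k Hd H => [//|k] Hd H.
  have Hs' : {subset fv p <= x :: V}.
    move=> z zp; rewrite inE; case: (eqVneq z x) => //= zx.
    by apply: Hs; rewrite mem_filter zx zp.
  split=> Ha a.
  + have [a' H'] := ext_lemma x a (eqv_sym H).
    exact: (IH k Hok Hd _ _ _ (eqv_sym H') Hs').1 (Ha a').
  + have [a' H'] := ext_lemma x a H.
    exact: (IH k Hok Hd _ _ _ H' Hs').2 (Ha a').
Qed.
End Invariance.

Lemma eqv_pad G (W : pred nat) V e e' : 0%R \in G ->
  (forall i j, W i -> W j -> forall q, q \in G ->
     (e i = Mscale q (e j) <-> e' i = Mscale q (e' j))) ->
  (forall k, ~~ W k -> e k = Mzero /\ e' k = Mzero) -> eqv G V e e'.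
Proof.
move=> G0 HW Hz i j _ _ q qG.
have zi : forall k, W k -> (e k = Mzero <-> e' k = Mzero).
  by move=> k Wk; have := HW k k Wk Wk 0%R G0; rewrite !Mscale0.
case: (boolP (W i)) => Wi; case: (boolP (W j)) => Wj.
- exact: HW.
- have [-> ->] := Hz j Wj; rewrite !MscaleZ; exact: zi.
- have [-> ->] := Hz i Wi; rewrite !Mzero_scale; have := zi j Wj; intuition.
- have [-> ->] := Hz i Wi; have [-> ->] := Hz j Wj; by rewrite !MscaleZ.
Qed.
Lemma atoms_ok_true {S : signature} (p : formula S) : atoms_ok (fun _ => True) p.
Proof. by elim: p => //= *; split. Qed.

Fixpoint ratios (p : formula sig_scal) : seq rat :=
  match p with
  | @FRel _ i _ => [:: (i : rat)]
  | FNot p => ratios p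
  | FAnd p q | FOr p q | FImp p q => ratios p ++ ratios q
  | FEx _ p | FAll _ p => ratios p
  | _ => [::]
  end.

Lemma ratios_ok (G : seq rat) p : {subset ratios p <= G} ->
  atoms_ok (fun r : sig_idx sig_scal => (r : rat) \in G) p.
Proof.
elim: p => //= [i _|p IHp q IHq|p IHp q IHq|p IHp q IHq] H.
- by apply: H; rewrite inE eqxx.
- split; [apply: IHp | apply: IHq] => z z1; apply: H; by rewrite mem_cat z1 ?orbT.
- split; [apply: IHp | apply: IHq] => z z1; apply: H; by rewrite mem_cat z1 ?orbT.
- split; [apply: IHp | apply: IHq] => z z1; apply: H; by rewrite mem_cat z1 ?orbT.
Qed.

Lemma scal_atom_inv (G0 : seq rat) (i : sig_idx sig_scal) (args : 'I_(sig_ar i) -> nat) V e e' :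
  (i : rat) \in G0 -> eqv G0 V e e' -> (forall j, args j \in V) ->
  (@sig_interp sig_scal i (fun j => e (args j)) <-> @sig_interp sig_scal i (fun j => e' (args j))).
Proof. move=> iG H Ha /=; apply: H => //. Qed.

Section RSec.
Variable n : nat.
Variable R : relM n.
Hypothesis HR : two_definable R.

Definition extu (u : 'I_n -> M) (k : nat) : M :=
  if (insub k : option 'I_n) is Some i then u i else Mzero.

Lemma extu_val u (i : 'I_n) : extu u i = u i.
Proof. by rewrite /extu valK. Qed.
Lemma extu_lt u k (Hk : (k < n)%N) : extu u k = u (Ordinal Hk).
Proof. by rewrite /extu insubT. Qed.
Lemma extu_ge u k : ~~ (k < n)%N -> extu u k = Mzero.
Proof. by move=> Hk; rewrite /extu insubN. Qed.

Lemma R_inv : exists GR : seq rat, 0%R \in GR /\ 1%R \in GR /\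
  forall (args : 'I_n -> nat) V e e', eqv GR V e e' -> (forall j, args j \in V) ->
  (R (fun j => e (args j)) <-> R (fun j => e' (args j))).
Proof.
case: HR => phi Hphi.
pose G0 : seq rat := [:: 0%R, 1%R & ratios phi].
have G00 : 0%R \in G0 by rewrite inE eqxx.
have G01 : 1%R \in G0 by rewrite !inE eqxx orbT.
exists (Gn G0 (depth phi)); split; first exact: G0_Gn.
split; first exact: G0_Gn.
move=> args V e e' H Hargs.
have Ru : forall u : 'I_n -> M, R u <-> sat (extu u) phi.
  move=> u; rewrite -Hphi; have -> // : (fun i : 'I_n => extu u i) = u.
  by apply: functional_extensionality => i; rewrite extu_val.
rewrite !Ru.
apply: (@sat_inv sig_scal (fun r : sig_idx sig_scal => (r : rat) \in G0) G0 G01 _ phi (depth phi) _ (leqnn _) (fv phi)) => //.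
- move=> i a V' f f' Hi Hf Ha; exact: scal_atom_inv Hi Hf Ha.
- apply: ratios_ok => z zr; by rewrite !inE zr !orbT.
- apply: (@eqv_pad _ (fun k => (k < n)%N)); first exact: G0_Gn.
  + move=> i j Hi Hj q qG.
    rewrite (extu_lt (fun j => e (args j)) Hi) (extu_lt (fun j => e (args j)) Hj).
    rewrite (extu_lt (fun j => e' (args j)) Hi) (extu_lt (fun j => e' (args j)) Hj).
    exact: H.
  + by move=> k Hk; rewrite !extu_ge.
Qed.

Definition Rdef (P : (nat -> M) -> Prop) :=
  exists psi : formula (sig_single R), forall e, P e <-> sat e psi.
Definition supp (P : (nat -> M) -> Prop) (V : seq nat) :=
  forall e e', (forall i, i \in V -> e i = e' i) -> (P e <-> P e').

Lemma Rdef_inv P V : supp P V -> Rdef P ->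
  exists G : seq rat, forall e e', eqv G V e e' -> (P e <-> P e').
Proof.
move=> Hs [psi Hpsi].
have [GR [G0 [G1 HRi]]] := R_inv.
exists (Gn GR (depth psi)) => e e' H.
pose e0 := fun k => if k \in V then e k else Mzero.
pose e0' := fun k => if k \in V then e' k else Mzero.
have E1 : P e <-> P e0 by apply: Hs => i iV; rewrite /e0 iV.
have E2 : P e' <-> P e0' by apply: Hs => i iV; rewrite /e0' iV.
rewrite E1 E2 !Hpsi.
apply: (@sat_inv (sig_single R) (fun _ => True) GR G1 _ psi (depth psi) _ (leqnn _) (fv psi)) => //.
- move=> i a V' f f' _ Hf Ha; exact: HRi Hf Ha.
- exact: atoms_ok_true.
- apply: (@eqv_pad _ (fun k => k \in V)); first exact: G0_Gn.
  + move=> i j Hi Hj q qG; rewrite /e0 /e0' Hi Hj; exact: H.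
  + by move=> k Hk; rewrite /e0 /e0' (negbTE Hk).
Qed.
End RSec.
Definition Gfresh (G : seq rat) (W : seq nat) (e : nat -> M) (y : M) :=
  y <> Mzero /\ forall j q, j \in W -> q \in G -> q != 0%R ->
    y <> Mscale q (e j) /\ e j <> Mscale q y.

Lemma Gfresh_unit G W e N : (forall j, j \in W -> Mseq (e j) N = 0%R) ->
  Gfresh G W e (Munit N).
Proof.
move=> H; split; first exact: Munit_nz.
move=> j q jW _ q0; have [h1 h2] := Munit_far q (H j jW); split => //; exact: h2 q0.
Qed.

Lemma Gfresh_ex G W e (L : seq nat) (h : nat -> M) :
  exists y, Gfresh G W e y /\ forall k, k \in L -> y <> h k.
Proof.
have [N1 H1] := supp_bound W e; have [N2 H2] := supp_bound L h.
exists (Munit (maxn N1 N2)); split.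
- apply: Gfresh_unit => j jW; apply: H1 => //; exact: leq_maxl.
- move=> k kL; have := (Munit_far 1%R (H2 k kL _ (leq_maxr N1 N2))).1.
  by rewrite Mscale1.
Qed.

Lemma Gfresh_ext G W e e' y : (forall j, j \in W -> e j = e' j) ->
  Gfresh G W e y -> Gfresh G W e' y.
Proof.
move=> E [y0 H]; split => // j q jW qG q0; rewrite -E //; exact: H.
Qed.

Lemma fresh_swap G V t (P : (nat -> M) -> Prop) e y f :
  (forall e e', eqv G V e e' -> (P e <-> P e')) ->
  Gfresh G [seq x <- V | x != t] e y -> Gfresh G [seq x <- V | x != t] e f ->
  (P (upd e t y) <-> P (upd e t f)).
Proof.
move=> HP [y0 Hy] [f0 Hf]; apply: HP => i j iV jV q qG.
case: (eqVneq i t) => [->|it]; case: (eqVneq j t) => [->|jt].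
- by rewrite !upd_eq (Mself q y0) (Mself q f0).
- have jW : j \in [seq x <- V | x != t] by rewrite mem_filter jt.
  rewrite !upd_eq !(upd_neq _ _ jt).
  case: (eqVneq q 0%R) => [->|q0]; first by rewrite !Mscale0.
  have [h1 _] := Hy j q jW qG q0; have [h2 _] := Hf j q jW qG q0; by split.
- have iW : i \in [seq x <- V | x != t] by rewrite mem_filter it.
  rewrite !upd_eq !(upd_neq _ _ it).
  case: (eqVneq q 0%R) => [->|q0]; first by rewrite !Mscale0.
  have [_ h1] := Hy i q iW qG q0; have [_ h2] := Hf i q iW qG q0; by split.
- by rewrite !(upd_neq _ _ it) !(upd_neq _ _ jt).
Qed.

Definition FreshP G V t (P : (nat -> M) -> Prop) (e : nat -> M) :=
  exists f, Gfresh G [seq x <- V | x != t] e f /\ P (upd e t f).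

Lemma FreshP_char G V t P e : (forall e e', eqv G V e e' -> (P e <-> P e')) ->
  (FreshP G V t P e <-> forall f, Gfresh G [seq x <- V | x != t] e f -> P (upd e t f)).
Proof.
move=> HP; split.
- move=> [f0 [Hf0 P0]] f Hf; exact: (fresh_swap HP Hf0 Hf).1 P0.
- move=> H; have [y [Hy _]] := Gfresh_ex G [seq x <- V | x != t] e [::] e.
  exists y; split => //; exact: H.
Qed.

Lemma FreshP_supp G V t P : supp P V ->
  supp (FreshP G V t P) [seq x <- V | x != t].
Proof.
move=> Hs e e' E.
have E2 : forall f, P (upd e t f) <-> P (upd e' t f).
  move=> f; apply: Hs => i iV; rewrite /upd; case: eqP => // /eqP it.
  apply: E; by rewrite mem_filter it.
split=> [[f [Hf Pf]]|[f [Hf Pf]]]; exists f; split.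
- exact: Gfresh_ext E Hf.
- by rewrite -E2.
- by apply: Gfresh_ext Hf => j jW; rewrite E.
- by rewrite E2.
Qed.

Fixpoint exsK {S : signature} (N K : nat) (p : formula S) : formula S :=
  match K with 0 => p | K'.+1 => FEx N (exsK N.+1 K' p) end.

Lemma sat_exsK S N K (p : formula S) e : sat e (exsK N K p) <->
  exists h : nat -> M, sat (fun v => if (N <= v < N + K)%N then h v else e v) p.
Proof.
elim: K N e => [|K IH] N e /=.
  have E : forall h : nat -> M, (fun v => if (N <= v < N + 0)%N then h v else e v) = e.
    move=> h; apply: functional_extensionality => v; rewrite addn0.
    by rewrite ltnNge andbN.
  split => [H|[h H]]; [by exists e; rewrite E | by rewrite E in H].
split.
- move=> [a /IH [h H]]; exists (fun v => if v == N then a else h v).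
  suff <- : (fun v => if (N.+1 <= v < N.+1 + K)%N then h v else upd e N a v) =
    (fun v => if (N <= v < N + K.+1)%N then (if v == N then a else h v) else e v) by [].
  apply: functional_extensionality => v; rewrite /upd.
  case: (eqVneq v N) => [->|vN].
    have -> : (N.+1 <= N < N.+1 + K)%N = false by lia.
    have -> : (N <= N < N + K.+1)%N = true by lia.
    by [].
  have -> : (N.+1 <= v < N.+1 + K)%N = (N <= v < N + K.+1)%N by apply/idP/idP; lia.
  by case: ifP.
- move=> [h H]; exists (h N); apply/IH; exists h.
  suff -> : (fun v => if (N.+1 <= v < N.+1 + K)%N then h v else upd e N (h N) v) =
    (fun v => if (N <= v < N + K.+1)%N then h v else e v) by [].
  apply: functional_extensionality => v; rewrite /upd.
  case: (eqVneq v N) => [->|vN].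
    have -> : (N.+1 <= N < N.+1 + K)%N = false by lia.
    have -> : (N <= N < N + K.+1)%N = true by lia.
    by [].
  have -> : (N.+1 <= v < N.+1 + K)%N = (N <= v < N + K.+1)%N by apply/idP/idP; lia.
  by [].
Qed.

Fixpoint neqK {S : signature} (t N K : nat) : formula S :=
  match K with 0 => FNot (FFalse S) | K'.+1 => FAnd (FNot (FEq S t N)) (neqK t N.+1 K') end.

Lemma sat_neqK S t N K e : sat e (@neqK S t N K) <-> forall i, (i < K)%N -> e t <> e (N + i).
Proof.
elim: K N => [|K IH] N /=; first by split => // _ i.
rewrite IH; split.
- move=> [h1 h2] [|i] Hi; first by rewrite addn0.
  by rewrite -addSnnS; apply: h2.
- move=> H; split; first by have := H 0 isT; rewrite addn0.
  move=> i Hi; rewrite addSnnS; exact: H.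
Qed.

Definition neqL {S : signature} (t : nat) (L : seq nat) : formula S :=
  foldr (fun k acc => FAnd (FNot (FEq S t k)) acc) (FNot (FFalse S)) L.

Lemma sat_neqL S t L e : sat e (@neqL S t L) <-> forall k, k \in L -> e t <> e k.
Proof.
elim: L => [|k L IH] /=; first by split => // _ k.
rewrite IH; split.
- move=> [h1 h2] k'; rewrite inE => /orP[/eqP->|]; [exact: h1 | exact: h2].
- move=> H; split; first by apply: H; rewrite inE eqxx.
  move=> k' kL; apply: H; by rewrite inE kL orbT.
Qed.

Fixpoint cands (G : seq rat) (e : nat -> M) (W : seq nat) : seq M :=
  match W with
  | [::] => [:: Mzero]
  | j :: W' => [seq Mscale q (e j) | q <- G] ++ [seq Mscale q^-1%R (e j) | q <- G] ++ cands G e W'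
  end.

Lemma size_cands G e W : size (cands G e W) = size W * (size G + size G) + 1.
Proof. elim: W => //= j W IH; rewrite !size_cat !size_map IH mulSn; lia. Qed.

Lemma In_mem (q : rat) (s : seq rat) : q \in s -> List.In q s.
Proof. elim: s => //= a s IH; rewrite inE => /orP[/eqP->|]; [by left | right; exact: IH]. Qed.

Lemma In_app (x : M) s1 s2 : List.In x s1 \/ List.In x s2 -> List.In x (s1 ++ s2).
Proof. elim: s1 => [|a s1 IH] /=; first by case. by case=> [[->|H]|H]; [left|right; apply: IH; left|right; apply: IH; right]. Qed.

Lemma In_map_rat (f : rat -> M) (s : seq rat) q : q \in s -> List.In (f q) (map f s).
Proof. elim: s => //= a s IH; rewrite inE => /orP[/eqP->|]; [by left | right; exact: IH]. Qed.

Lemma cands_in G e W :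
  List.In Mzero (cands G e W) /\ forall j q, j \in W -> q \in G ->
    List.In (Mscale q (e j)) (cands G e W) /\ List.In (Mscale q^-1%R (e j)) (cands G e W).
Proof.
elim: W => [|j W [IH0 IH]] /=; first by split; [left | ].
split; first by apply: In_app; right; apply: In_app; right.
move=> j' q; rewrite inE => /orP[/eqP->|jW] qG.
- split; apply: In_app; [left | right; apply: In_app; left]; exact: In_map_rat.
- have [h1 h2] := IH j' q jW qG.
  split; apply: In_app; right; apply: In_app; by right.
Qed.

Lemma In_nth (x : M) s : List.In x s -> exists i, (i < size s)%N /\ nth Mzero s i = x.
Proof.
elim: s => //= a s IH [->|H]; first by exists 0.
have [i [h1 h2]] := IH H; by exists i.+1.
Qed.

Lemma foldr_max_lt V v : v \in V -> (v < (foldr maxn 0 V).+1)%N.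
Proof.
elim: V => //= a V IH; rewrite inE => /orP[/eqP->|vV]; first by rewrite ltnS leq_maxl.
apply: leq_trans (IH vV) _; rewrite ltnS; exact: leq_maxr.
Qed.

Section FreshDef.
Variable n : nat.
Variable R : relM n.

Lemma FreshP_def G V t P : supp P V -> Rdef R P ->
  (forall e e', eqv G V e e' -> (P e <-> P e')) -> t \in V ->
  Rdef R (FreshP G V t P).
Proof.
move=> Hs [psi Hpsi] HP tV.
pose W := [seq x <- V | x != t].
pose K := size W * (size G + size G) + 1.
pose N0 := (foldr maxn 0 V).+1.
have VN : forall v, v \in V -> (v < N0)%N by move=> v; exact: foldr_max_lt.
have tN : (t < N0)%N by exact: VN.
exists (exsK N0 K (FAll t (FImp (neqK t N0 K) psi))) => e.
rewrite sat_exsK /=.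
pose eh := fun (h : nat -> M) v => if (N0 <= v < N0 + K)%N then h v else e v.
have key1 : forall h a, sat (upd (eh h) t a) (@neqK (sig_single R) t N0 K) <-> forall i, (i < K)%N -> a <> h (N0 + i).
  move=> h a; rewrite sat_neqK upd_eq; split => H i Hi.
  - have := H i Hi; rewrite upd_neq; last by apply/eqP; lia.
    by rewrite /eh; have -> : (N0 <= N0 + i < N0 + K)%N by lia.
  - rewrite upd_neq; last by apply/eqP; lia.
    have E : (N0 <= N0 + i < N0 + K)%N by lia.
    by rewrite /eh E; exact: H i Hi.
have key2 : forall h a, sat (upd (eh h) t a) psi <-> P (upd e t a).
  move=> h a; rewrite -Hpsi; apply: Hs => v vV; rewrite /upd; case: eqP => // _.
  rewrite /eh; have -> : (N0 <= v < N0 + K)%N = false by have := VN v vV; lia.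
  by [].
split.
- move=> HF; exists (fun v => nth Mzero (cands G e W) (v - N0)) => a.
  rewrite -/(eh _) key1 key2 => Ha.
  have notin : forall x, List.In x (cands G e W) -> a <> x.
    move=> x /In_nth [i [Hi <-]]; rewrite size_cands in Hi.
    have := Ha i Hi; by rewrite addKn.
  have [c0 cq] := cands_in G e W.
  have HH := proj1 (FreshP_char t e HP) HF; apply: HH; split; first exact: notin c0.
  move=> j q jW qG q0; have [h1 h2] := cq j q jW qG; split; first exact: notin _ h1.
  move=> E; apply: (notin _ h2); by rewrite E MscaleA mulVf // Mscale1.
- move=> [h H]; have [y [Hy Hyh]] := Gfresh_ex G W e [seq N0 + i | i <- iota 0 K] h.
  exists y; split => //.
  have := H y; rewrite -/(eh _) key1 key2; apply => i Hi.
  apply: Hyh; apply: map_f; by rewrite mem_iota.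
Qed.
End FreshDef.
Section Main.
Variable n : nat.
Variable R : relM n.
Hypothesis HR : two_definable R.
Hypothesis Hz : ~ definable (sig_single R) zero_rel.

Definition eqinv (P : (nat -> M) -> Prop) (V : seq nat) :=
  forall e e', (forall i j, i \in V -> j \in V -> (e i = e j <-> e' i = e' j)) -> (P e <-> P e').

Definition inj_on (e : nat -> M) (V : seq nat) :=
  forall i j, i \in V -> j \in V -> e i = e j -> i = j.

Lemma case1 j P : supp P [:: j] -> Rdef R P -> forall e e', P e <-> P e'.
Proof.
move=> Hs HRP; have [G HG] := Rdef_inv HR Hs HRP; case: HRP => psi Hpsi.
have nz : forall x x', x j <> Mzero -> x' j <> Mzero -> (P x <-> P x').
  move=> x x' h1 h2; apply: HG => i i'; rewrite !inE => /eqP-> /eqP-> q qG.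
  by rewrite (Mself q h1) (Mself q h2).
have zz : forall x x', x j = Mzero -> x' j = Mzero -> (P x <-> P x').
  move=> x x' h1 h2; apply: Hs => i; rewrite inE => /eqP->; by rewrite h1 h2.
have ex : forall z c, z j = Mzero -> c j <> Mzero -> ~ (P z <-> P c) -> False.
  move=> z c z0 c0 Hzc; apply: Hz.
  pose w := j.+1.
  have w0 : (0 != w)%N by [].
  have wj : (j != w)%N by rewrite /w neq_ltn ltnSn.
  have wj' : (w != j)%N by rewrite eq_sym.
  pose Z := FEx w (FAnd (FEq _ w 0) (FEx j (FAnd (FEq _ j w) psi))).
  have HZ : forall x, sat x Z <-> P (upd x j (x 0)).
    move=> x /=; split.
    - move=> [a [Ea [b [Eb Hb]]]].
      rewrite upd_eq (upd_neq _ _ w0) in Ea.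
      rewrite upd_eq (upd_neq _ _ wj') upd_eq in Eb.
      rewrite -Hpsi in Hb; apply: (proj1 (Hs _ _ _) Hb) => i; rewrite inE => /eqP->.
      by rewrite !upd_eq Eb Ea.
    - move=> H; exists (x 0); split; first by rewrite upd_eq (upd_neq _ _ w0).
      exists (x 0); split; first by rewrite upd_eq (upd_neq _ _ wj') upd_eq.
      rewrite -Hpsi; apply: (proj1 (Hs _ _ _) H) => i; rewrite inE => /eqP->.
      by rewrite !upd_eq.
  case: (classic (P z)) => Pz; [exists Z => x; change (x 0 = Mzero <-> sat x Z)
    | exists (FNot Z) => x; change (x 0 = Mzero <-> ~ sat x Z)];
    rewrite HZ; case: (classic (x 0 = Mzero)) => x0.
  - split => // _.
    have h1 : upd x j (x 0) j = Mzero by rewrite upd_eq.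
    exact: (proj2 (zz _ z h1 z0) Pz).
  - split => // H; exfalso; apply: Hzc; split => // _.
    have h1 : upd x j (x 0) j <> Mzero by rewrite upd_eq.
    exact: (proj1 (nz _ c h1 c0) H).
  - split => // _ H; apply: Pz.
    have h1 : upd x j (x 0) j = Mzero by rewrite upd_eq.
    exact: (proj1 (zz _ z h1 z0) H).
  - split => // H; exfalso; apply: H.
    have h1 : upd x j (x 0) j <> Mzero by rewrite upd_eq.
    apply: (proj2 (nz _ c h1 c0)).
    apply: NNPP => Pc; apply: Hzc; split => //.
move=> e e'; apply: NNPP => Hne.
case: (classic (e j = Mzero)) => e0; case: (classic (e' j = Mzero)) => e'0.
- by apply: Hne; apply: zz.
- apply: (ex e e') => //.
- apply: (ex e' e e'0 e0) => H; apply: Hne; exact: iff_sym H.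
- by apply: Hne; apply: nz.
Qed.

Lemma case2 s k P : s != k -> supp P [:: s; k] -> Rdef R P ->
  exists c : Prop, forall x, x s <> x k -> (P x <-> c).
Proof.
move=> sk Hs HRP; have [G HG] := Rdef_inv HR Hs HRP; case: HRP => psi Hpsi.
have ks : k != s by rewrite eq_sym.
have E2 : forall x x' y, x k = x' k -> (P (upd x s y) <-> P (upd x' s y)).
  move=> x x' y Ek; apply: Hs => i; rewrite !inE => /orP[/eqP->|/eqP->].
  - by rewrite !upd_eq.
  - by rewrite !(upd_neq _ _ ks).
pose Qe := fun x => exists y, y <> x k /\ P (upd x s y).
pose Qa := fun x => forall y, y <> x k -> P (upd x s y).
have sQe : supp Qe [:: k].
  move=> x x' E; have Ek : x k = x' k by apply: E; rewrite inE.
  split => [[y [h1 h2]]|[y [h1 h2]]]; exists y; split.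
  - by rewrite -Ek.
  - by rewrite -(E2 x x' y Ek).
  - by rewrite Ek.
  - by rewrite (E2 x x' y Ek).
have sQa : supp Qa [:: k].
  move=> x x' E; have Ek : x k = x' k by apply: E; rewrite inE.
  split => H y hy.
  - rewrite -(E2 x x' y Ek); apply: H; by rewrite Ek.
  - rewrite (E2 x x' y Ek); apply: H; by rewrite -Ek.
have dQe : Rdef R Qe.
  exists (FEx s (FAnd (FNot (FEq _ s k)) psi)) => x /=.
  split => [[y [h1 h2]]|[y [h1 h2]]]; exists y; split.
  - by rewrite upd_eq (upd_neq _ _ ks).
  - by rewrite -Hpsi.
  - by move: h1; rewrite upd_eq (upd_neq _ _ ks).
  - by rewrite Hpsi.
have dQa : Rdef R Qa.
  exists (FAll s (FImp (FNot (FEq _ s k)) psi)) => x /=.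
  split => H y.
  - rewrite upd_eq (upd_neq _ _ ks) -Hpsi; exact: H.
  - move=> hy; rewrite Hpsi; apply: H; by rewrite upd_eq (upd_neq _ _ ks).
have cQe := case1 sQe dQe; have cQa := case1 sQa dQa.
pose z0 := fun _ : nat => Mzero.
exists (Qe z0) => x xsk.
split.
- move=> Px; apply/(cQe x); exists (x s); split => //; by rewrite upd_same.
- move=> [y [y0 Py]]; rewrite -(upd_same x s).
  have Qaz : Qa z0.
    move=> y' y'0; apply: (proj1 (HG _ _ _) Py).
    move=> i i'; rewrite !inE => /orP[/eqP->|/eqP->] /orP[/eqP->|/eqP->] q qG;
      rewrite ?upd_eq ?(upd_neq _ _ ks).
    + by rewrite (Mself q y0) (Mself q y'0).
    + rewrite !MscaleZ; by split.
    + rewrite !Mzero_scale; by split => [[->|//]|[->|//]]; left.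
    + by [].
  have := proj1 (cQa z0 x) Qaz; apply; exact: xsk.
Qed.

Lemma two_elems (V : seq nat) : uniq V -> (2 <= size V)%N ->
  exists a b, a \in V /\ b \in V /\ a != b.
Proof.
case: V => [|a [|b r]] //= /andP[ab _] _.
exists a, b; split; first by rewrite inE eqxx.
split; first by rewrite !inE eqxx orbT.
by apply/eqP => E; subst; rewrite inE eqxx in ab.
Qed.

Lemma size_filter_lt (V : seq nat) t : t \in V -> (size [seq v <- V | v != t] < size V)%N.
Proof.
elim: V => //= a V IH; rewrite inE; case: (eqVneq a t) => [->|ant] /=.
- by move=> _; rewrite ltnS size_filter count_size.
- by move=> tV; rewrite ltnS; exact: IH tV.
Qed.

Lemma case3 s V' P : uniq (s :: V') -> (2 <= size V')%N -> supp P (s :: V') -> Rdef R P ->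
  (forall V'' P', uniq V'' -> (size V'' < (size V').+1)%N -> supp P' V'' -> Rdef R P' -> eqinv P' V'') ->
  forall x, inj_on x (s :: V') -> (P x <-> P (fun v => Munit v)).
Proof.
move=> uV sz Hs HRP IH x xinj.
have [G HG] := Rdef_inv HR Hs HRP; case: (HRP) => psi Hpsi.
have uV0 := uV; move: uV0; rewrite cons_uniq => /andP[sV' uV'].
pose g0 := fun v : nat => Munit v.
apply: NNPP => Hne.
pose Pgen := P g0.
pose D := fun z => ~ (P z <-> Pgen).
pose Q := fun z => exists y, (forall k, k \in V' -> y <> z k) /\ D (upd z s y).
have skV : forall k, k \in V' -> k != s.
  by move=> k kV; apply/eqP => E; subst; rewrite kV in sV'.
have sQ : supp Q V'.
  move=> z z' E.
  have EP : forall y, P (upd z s y) <-> P (upd z' s y).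
    move=> y; apply: Hs => i; rewrite inE => /orP[/eqP->|iV]; first by rewrite !upd_eq.
    by rewrite !(upd_neq _ _ (skV i iV)) E.
  split => [[y [h1 h2]]|[y [h1 h2]]]; exists y; split.
  - by move=> k kV; rewrite -E //; exact: h1.
  - by rewrite /D -EP.
  - by move=> k kV; rewrite E //; exact: h1.
  - by rewrite /D EP.
have dQ : Rdef R Q.
  case: (classic Pgen) => Pg.
  - exists (FEx s (FAnd (neqL s V') (FNot psi))) => z /=.
    split => [[y [h1 h2]]|[y [h1 h2]]]; exists y; split.
    + apply/sat_neqL => k kV; rewrite upd_eq (upd_neq _ _ (skV k kV)); exact: h1.
    + rewrite -Hpsi => H; apply: h2; split => // _.
    + move=> k kV; move/sat_neqL: h1 => /(_ k kV).
      by rewrite upd_eq (upd_neq _ _ (skV k kV)).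
    + move=> [_ H]; apply: h2; rewrite -Hpsi; exact: H Pg.
  - exists (FEx s (FAnd (neqL s V') psi)) => z /=.
    split => [[y [h1 h2]]|[y [h1 h2]]]; exists y; split.
    + apply/sat_neqL => k kV; rewrite upd_eq (upd_neq _ _ (skV k kV)); exact: h1.
    + rewrite -Hpsi; apply: NNPP => H; apply: h2; split => // H'; exact: Pg H'.
    + move=> k kV; move/sat_neqL: h1 => /(_ k kV).
      by rewrite upd_eq (upd_neq _ _ (skV k kV)).
    + move=> [H _]; apply: Pg; apply: H; by rewrite Hpsi.
have eQ : eqinv Q V' := IH V' Q uV' (ltnSn _) sQ dQ.
have Qx : Q x.
  exists (x s); split.
  - move=> k kV E; have kV2 : k \in s :: V' by rewrite inE kV orbT.
    have := xinj s k (mem_head _ _) kV2 E.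
    by move=> E2; move: (skV k kV); rewrite E2 eqxx.
  - by rewrite /D upd_same.
have Qg : Q g0.
  apply: (proj1 (eQ x g0 _) Qx) => i j iV jV; split => E.
  - by rewrite (xinj i j _ _ E) // inE ?iV ?jV orbT.
  - have E2 := Munit_inj E; by rewrite E2.
case: Qg => y [yne Dy].
have Wdef : [seq v <- s :: V' | v != s] = V'.
  rewrite /= eqxx /=; apply/all_filterP; apply/allP => v vV; exact: skV.
have [k0 Hk0] : exists k0, forall i, i != k0 -> Mseq y i = 0%R.
  apply: NNPP => Hno.
  have Fy : Gfresh G V' g0 y.
    split.
    - move=> y0; apply: Hno; exists 0 => i _; by rewrite y0.
    - move=> j q jV qG q0; split.
      + move=> E; apply: Hno; exists j => i ij.
        by rewrite E Mseq_scale Mseq_unit (negbTE ij) mulr0.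
      + move=> E; apply: Hno; exists j => i ij.
        have Ey : y = Mscale q^-1%R (Munit j) by rewrite /g0 in E; rewrite E MscaleA mulVf // Mscale1.
        by rewrite Ey Mseq_scale Mseq_unit (negbTE ij) mulr0.
  have Fs : Gfresh G V' g0 (Munit s).
    apply: Gfresh_unit => j jV; rewrite Mseq_unit eq_sym.
    by rewrite (negbTE (skV j jV)).
  rewrite -Wdef in Fy Fs.
  have := fresh_swap HG Fy Fs; rewrite (_ : upd g0 s (Munit s) = g0); last exact: upd_same.
  move=> E; apply: Dy; rewrite E; by [].
have [a [b [aV [bV ab]]]] := two_elems uV' sz.
have [t [tV' tk]] : exists t, t \in V' /\ t != k0.
  case: (eqVneq a k0) => [ak|ak]; last by exists a.
  exists b; split => //; by rewrite -ak eq_sym.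
have tV : t \in s :: V' by rewrite inE tV' orbT.
have ts := skV t tV'.
pose u := upd g0 s y.
pose W := [seq v <- s :: V' | v != t].
pose F := FreshP G (s :: V') t P.
have sF : supp F W := @FreshP_supp G (s :: V') t P Hs.
have dF : Rdef R F := @FreshP_def n R G (s :: V') t P Hs HRP HG tV.
have eF : eqinv F W.
  apply: IH sF dF; first exact: filter_uniq.
  exact: size_filter_lt.
have Fu : F u <-> P u.
  have Gu : Gfresh G W u (Munit t).
    apply: Gfresh_unit => j; rewrite mem_filter => /andP[jt jV].
    rewrite /u /upd; case: eqP => [_|_]; first exact: Hk0.
    by rewrite Mseq_unit eq_sym (negbTE jt).
  have ut : upd u t (Munit t) = u.
    have -> : Munit t = u t by rewrite /u upd_neq.
    exact: upd_same.
  split.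
  - move=> HF; have := proj1 (FreshP_char t u HG) HF (Munit t) Gu; by rewrite ut.
  - move=> Pu; exists (Munit t); split => //; by rewrite ut.
have Fg : F g0 <-> P g0.
  have Gg : Gfresh G W g0 (Munit t).
    apply: Gfresh_unit => j; rewrite mem_filter => /andP[jt jV].
    by rewrite Mseq_unit eq_sym (negbTE jt).
  have gt : upd g0 t (Munit t) = g0 by exact: upd_same.
  split.
  - move=> HF; have := proj1 (FreshP_char t g0 HG) HF (Munit t) Gg; by rewrite gt.
  - move=> Pg; exists (Munit t); split => //; by rewrite gt.
have uinj : forall i j, i \in s :: V' -> j \in s :: V' -> u i = u j -> i = j.
  move=> i j iV jV; rewrite /u /upd.
  case: (eqVneq i s) => [->|i_s]; case: (eqVneq j s) => [->|j_s] // E.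
  - exfalso; apply: (yne j) E; move: jV; rewrite inE (negbTE j_s) //.
  - exfalso; apply: (yne i) (esym E); move: iV; rewrite inE (negbTE i_s) //.
  - exact: Munit_inj E.
have Eug : F u <-> F g0.
  apply: eF => i j; rewrite !mem_filter => /andP[_ iV] /andP[_ jV]; split => E.
  - by rewrite (uinj i j iV jV E).
  - have E2 := Munit_inj E; by rewrite E2.
apply: Dy; rewrite -Fu Eug Fg; by [].
Qed.

Lemma inj_const V P : uniq V -> supp P V -> Rdef R P ->
  (forall V'' P', uniq V'' -> (size V'' < size V)%N -> supp P' V'' -> Rdef R P' -> eqinv P' V'') ->
  forall x x', inj_on x V -> inj_on x' V -> (P x <-> P x').
Proof.
case: V => [|s [|k [|l r]]] uV Hs HRP IH x x' ix ix'.
- by apply: Hs => i; rewrite in_nil.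
- exact: case1 Hs HRP x x'.
- have sk : s != k by move: uV => /= /andP[]; rewrite inE.
  have [c Hc] := case2 sk Hs HRP.
  have xs : forall z, inj_on z [:: s; k] -> z s <> z k.
    move=> z iz E; have kV : k \in [:: s; k] by rewrite !inE eqxx orbT.
    have := iz s k (mem_head _ _) kV E; move=> E2; by rewrite E2 eqxx in sk.
  rewrite (Hc x) ?(Hc x') //; exact: xs.
- rewrite (case3 uV _ Hs HRP IH ix) // (case3 uV _ Hs HRP IH ix') //.
Qed.

Lemma main_ind : forall m V P, uniq V -> size V = m -> supp P V -> Rdef R P -> eqinv P V.
Proof.
elim/ltn_ind => m IH V P uV sV Hs HRP e e' Heq.
have IH' : forall V'' P', uniq V'' -> (size V'' < m)%N -> supp P' V'' -> Rdef R P' -> eqinv P' V''.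
  move=> V'' P' u s'; exact: IH _ s' V'' P' u erefl.
case: (classic (exists i j, i \in V /\ j \in V /\ i != j /\ e i = e j))
  => [[i [j [iV [jV [ij Eij]]]]] | Hinj].
- pose W := [seq v <- V | v != j].
  pose P' := fun x : nat -> M => P (upd x j (x i)).
  have iW : i \in W by rewrite mem_filter ij iV.
  have sP' : supp P' W.
    move=> x x' E; apply: Hs => v vV; rewrite /upd; case: eqP => [_|/eqP vj].
    + exact: E.
    + apply: E; by rewrite mem_filter vj vV.
  have dP' : Rdef R P'.
    case: HRP => psi Hpsi; exists (FEx j (FAnd (FEq _ j i) psi)) => x /=.
    split.
    + move=> H; exists (x i); split; first by rewrite upd_eq (upd_neq _ _ ij).
      by rewrite -Hpsi.
    + move=> [a [Ea Ha]]; rewrite upd_eq (upd_neq _ _ ij) in Ea.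
      rewrite -Hpsi Ea in Ha; exact: Ha.
  have eP' : eqinv P' W.
    apply: IH' sP' dP'; first exact: filter_uniq.
    rewrite -sV; exact: size_filter_lt.
  have e'ij : e' i = e' j by apply/(Heq i j iV jV).
  have Ee : P e <-> P' e by rewrite /P' Eij upd_same.
  have Ee' : P e' <-> P' e' by rewrite /P' e'ij upd_same.
  rewrite Ee Ee'; apply: eP' => a b; rewrite !mem_filter => /andP[_ aV] /andP[_ bV].
  exact: Heq.
- have xinj : inj_on e V.
    move=> a b aV bV E; apply: NNPP => ab; apply: Hinj; exists a, b.
    split => //; split => //; split => //; by apply/eqP.
  have xinj' : inj_on e' V.
    move=> a b aV bV E; apply: xinj => //; exact: (proj2 (Heq a b aV bV) E).
  apply: (inj_const uV Hs HRP) => //; by rewrite sV.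
Qed.
End Main.

Fixpoint phi_match (ps : seq (nat * nat)) (tau : seq bool) : formula sig_eq :=
  match ps, tau with
  | (a, b) :: ps', c :: tau' =>
      FAnd (if c then FEq _ a b else FNot (FEq _ a b)) (phi_match ps' tau')
  | _, _ => FNot (FFalse _)
  end.

Fixpoint mtch (e : nat -> M) (ps : seq (nat * nat)) (tau : seq bool) : Prop :=
  match ps, tau with
  | (a, b) :: ps', c :: tau' => (e a = e b <-> c = true) /\ mtch e ps' tau'
  | _, _ => True
  end.

Lemma sat_match e ps tau : sat e (phi_match ps tau) <-> mtch e ps tau.
Proof.
elim: ps tau => [|[a b] ps IH] [|c tau] //=; try by split => [_|_ []].
rewrite IH; case: c => /=; split => [[h1 h2]|[h1 h2]]; split => //;
  solve [by split | exact: (proj2 h1) erefl | by split => // H; exfalso; apply: h1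
        | by move=> H; have := proj1 h1 H].
Qed.

Fixpoint allbits (L : nat) : seq (seq bool) :=
  match L with
  | 0 => [:: [::]]
  | L'.+1 => map (cons true) (allbits L') ++ map (cons false) (allbits L')
  end.

Lemma size_allbits L tau : tau \in allbits L -> size tau = L.
Proof.
elim: L tau => [|L IH] tau /=; first by rewrite inE => /eqP->.
by rewrite mem_cat => /orP[] /mapP[t tL ->] /=; rewrite IH.
Qed.

Lemma exists_tau e ps : exists tau, tau \in allbits (size ps) /\ mtch e ps tau.
Proof.
elim: ps => [|[a b] ps [tau [Ht Hm]]] /=; first by exists [::]; rewrite inE.
case: (classic (e a = e b)) => E.
- exists (true :: tau); split; first by rewrite mem_cat map_f.
  by split.
- exists (false :: tau); split; first by rewrite mem_cat map_f ?orbT.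
  by split.
Qed.

Lemma mtch_same e e' ps tau : size tau = size ps -> mtch e ps tau -> mtch e' ps tau ->
  forall a b, (a, b) \in ps -> (e a = e b <-> e' a = e' b).
Proof.
elim: ps tau => [|[a b] ps IH] [|c tau] //= [sz] [h1 h2] [h1' h2'] a' b'.
rewrite inE => /orP[/eqP [-> ->]|H].
- by rewrite h1 h1'.
- exact: IH sz h2 h2' a' b' H.
Qed.

Lemma disj_ex ps (good : seq bool -> Prop) (ts : seq (seq bool)) :
  exists phi : formula sig_eq, forall e,
    sat e phi <-> exists tau, tau \in ts /\ good tau /\ mtch e ps tau.
Proof.
elim: ts => [|tau ts [phi Hphi]].
  by exists (FFalse _) => e; split => // [[tau []]].
case: (classic (good tau)) => g.
- exists (FOr (phi_match ps tau) phi) => e /=; rewrite sat_match Hphi; split.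
  + case=> [H|[t [h1 [h2 h3]]]].
    * by exists tau; rewrite inE eqxx.
    * by exists t; rewrite inE h1 orbT.
  + move=> [t]; rewrite inE => -[/orP[/eqP->|h1] [h2 h3]]; first by left.
    right; by exists t.
- exists phi => e; rewrite Hphi; split.
  + move=> [t [h1 h2]]; by exists t; rewrite inE h1 orbT.
  + move=> [t]; rewrite inE => -[/orP[/eqP->|h1] [h2 h3]]; first by [].
    by exists t.
Qed.

Lemma eq_def n (R : relM n) (P : (nat -> M) -> Prop) :
  eqinv P (iota 0 n) -> (forall e : nat -> M, R (fun i : 'I_n => e i) <-> P e) -> definable sig_eq R.
Proof.
move=> HP HRP.
pose ps := [seq (i, j) | i <- iota 0 n, j <- iota 0 n].
pose good := fun tau => exists e0, size tau = size ps /\ mtch e0 ps tau /\ P e0.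
have [phi Hphi] := disj_ex ps good (allbits (size ps)).
exists phi => e; rewrite Hphi HRP; split.
- move=> Pe; have [tau [Ht Hm]] := exists_tau e ps.
  exists tau; split => //; split => //; exists e; split => //.
  exact: size_allbits.
- move=> [tau [Ht [[e0 [sz [Hm0 P0]]] Hm]]].
  apply/(HP e e0) => // i j iV jV.
  apply: (mtch_same sz Hm Hm0); exact: allpairs_f.
Qed.

Theorem mainTheorem3 (n : nat) (R : relM n) :
  two_definable R ->
  ~ definable sig_eq R ->
  definable (sig_single R) zero_rel.
Proof.
move=> HR Hnd; apply: NNPP => Hz; apply: Hnd.
pose P := fun e : nat -> M => R (fun i : 'I_n => e i).
have Hs : supp P (iota 0 n).
  move=> e e' E; rewrite /P.
  have -> : (fun i : 'I_n => e i) = (fun i : 'I_n => e' i); last by [].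
  apply: functional_extensionality => i; apply: E; by rewrite mem_iota add0n ltn_ord.
have HRP : Rdef R P.
  by exists (@FRel (sig_single R) tt (fun j : 'I_n => (j : nat))).
have := main_ind HR Hz (iota_uniq 0 n) erefl Hs HRP.
move=> HP; apply: (eq_def HP) => e; by [].
Qed.
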